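(* (a) For the star graph $S_n$ on $n\ge 2$ vertices (one center adjacent to $n-1$ leaves), $\gamma(S_n)=\dfrac{n}{2n-3}$. (b) For the complete bipartite graph $K_{m,n}$ with part sizes $m\ge n\ge 1$, $\gamma(K_{m,n})=\dfrac{m+n}{2m+n-2}$.
   Context: For a finite simple undirected graph $G$ with $N$ vertices, let $\mathcal{F}=\{x\in\mathbb{R}^{V(G)} : \sum_{v} x_v = 0,\ \|x\|_\infty = 1\}$, for $x\in\mathcal{F}$ let $\gamma_x(G)=\max_{uv\in E(G)}|x_u-x_v|$, and $\gamma(G)=\min_{x\in\mathcal{F}}\gamma_x(G)$. *)

(* Defs.v *)
From mathcomp Require Import all_boot all_order all_algebra.
From mathcomp Require Import reals.
Set Implicit Arguments. Unset Strict Implicit. Unset Printing Implicit Defensive.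
Import Order.TTheory GRing.Theory Num.Theory.
Local Open Scope ring_scope.

Definition simple_graph (T : finType) (e : rel T) : Prop :=
  symmetric e /\ irreflexive e.

Definition sup_norm (R : realType) (T : finType) (x : T -> R) : R :=
  \big[Num.max/0]_(v : T) `|x v|.

Definition inF (R : realType) (T : finType) (x : T -> R) : Prop :=
  \sum_(v : T) x v = 0 /\ sup_norm x = 1.

Definition gamma_x (R : realType) (T : finType) (e : rel T) (x : T -> R) : R :=
  \big[Num.max/0]_(p : T * T | e p.1 p.2) `|x p.1 - x p.2|.

Definition is_gamma (R : realType) (T : finType) (e : rel T) (g : R) : Prop :=
  (exists x : T -> R, inF x /\ gamma_x e x = g) /\
  (forall x : T -> R, inF x -> g <= gamma_x e x).

Definition star (n : nat) : rel 'I_n :=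
  fun u v => (val u == 0%N) != (val v == 0%N).

Definition Kbip (m n : nat) : rel ('I_m + 'I_n)%type :=
  fun u v => match u, v with
             | inl _, inr _ => true
             | inr _, inl _ => true
             | _, _ => false
             end.
Arguments star n : clear implicits.
Arguments Kbip m n : clear implicits.

(* Main.v *)
Require Import Defs.
From mathcomp Require Import all_boot all_order all_algebra.
From mathcomp Require Import reals ring lra zify.
Import Order.TTheory GRing.Theory Num.Theory.
Local Open Scope ring_scope.

Section Gen.
Variable R : realType.

Lemma bigmax_le (I : finType) (P : pred I) (F : I -> R) c :
  0 <= c -> (forall i, P i -> F i <= c) -> \big[Num.max/0]_(i | P i) F i <= c.
Proof.
move=> c0 H; elim/big_ind: _ => //.
by move=> a b ha hb; rewrite ge_max ha hb.
Qed.

Lemma le_bigmax (I : finType) (P : pred I) (F : I -> R) j :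
  P j -> F j <= \big[Num.max/0]_(i | P i) F i.
Proof. by move=> Pj; rewrite (bigD1 j) //= le_max lexx. Qed.

Lemma bigmax_attain (I : finType) (F : I -> R) :
  \big[Num.max/0]_(i : I) F i = 0 \/ exists i, \big[Num.max/0]_(i : I) F i = F i.
Proof.
elim/big_ind: _; first by left.
  move=> a b ha hb; case: (leP a b) => _; [exact: hb|exact: ha].
by move=> i _; right; exists i.
Qed.

Lemma gamma_ge0 (T : finType) (e : rel T) (x : T -> R) : 0 <= gamma_x e x.
Proof.
rewrite /gamma_x; elim/big_ind: _ => //.
by move=> a b ha hb; rewrite le_max ha.
Qed.


Lemma edge_le (T : finType) (e : rel T) (x : T -> R) u v :
  e u v -> `|x u - x v| <= gamma_x e x.
Proof. by move=> huv; rewrite /gamma_x; exact: (@le_bigmax _ (fun p : (T * T)%type => e p.1 p.2) (fun p : (T * T)%type => `|x p.1 - x p.2|) (u, v)). Qed.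

Lemma inF_attain (T : finType) (x : T -> R) : inF x -> exists w, `|x w| = 1.
Proof.
case=> _; rewrite /sup_norm; case: (@bigmax_attain T (fun v => `|x v|)) => [->|[w ->]].
  by move=> /eqP; rewrite eq_sym oner_eq0.
by move=> h; exists w.
Qed.

Lemma sum_ind (T : finType) (w : T) (b : R) : \sum_(v : T) (v == w)%:R * b = b.
Proof.
rewrite (bigD1 w) //= eqxx mul1r big1 ?addr0 // => v /negbTE ->; by rewrite mul0r.
Qed.

Lemma lower (T : finType) (e : rel T) (x : T -> R) w (B : T -> R) D :
  inF x -> `|x w| = 1 -> 0 < D -> (forall v, `|x w - x v| <= B v) ->
  \sum_v B v <= D * gamma_x e x -> #|T|%:R / D <= gamma_x e x.
Proof.
move=> [hs _] hw hD hB hsum; rewrite ler_pdivrMr // mulrC.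
apply: le_trans hsum.
have -> : (#|T|%:R : R) = `|\sum_v (x w - x v)|.
  by rewrite sumrB hs subr0 sumr_const normrMn hw.
apply: le_trans (ler_norm_sum _ _ _) _.
by apply: ler_sum => v _.
Qed.

Lemma attain (T : finType) (e : rel T) (x : T -> R) w g :
  (forall v, `|x v| <= 1) -> `|x w| = 1 -> \sum_v x v = 0 -> 0 <= g ->
  (exists u v, e u v) -> (forall u v, e u v -> `|x u - x v| = g) ->
  inF x /\ gamma_x e x = g.
Proof.
move=> h1 hw hs hg [u [v huv]] he; split.
  split=> //; apply/eqP; rewrite eq_le; apply/andP; split.
    by apply: bigmax_le => // i _.
  by rewrite -hw /sup_norm; exact: (@le_bigmax _ xpredT (fun v => `|x v|) w).
apply/eqP; rewrite eq_le; apply/andP; split.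
  by apply: bigmax_le => // p /he ->.
by rewrite -(he _ _ huv) edge_le.
Qed.
End Gen.

Lemma dist_key (R : realType) (g a b : R) : 0 <= g -> (b - a = 1 \/ b - a = -1) ->
  `|(1 - g * a) - (1 - g * b)| = g.
Proof.
move=> hg hab; have -> : (1 - g * a) - (1 - g * b) = g * (b - a) by ring.
rewrite normrM ger0_norm //; case: hab => ->; rewrite ?normrN normr1 mulr1 //.
Qed.

Lemma star_part (R : realType) (n : nat) : (2 <= n)%N ->
  is_gamma (star n) ((n%:R : R) / (2 * n - 3)%N%:R).
Proof.
case: n => [|[|k]] // _.
have hk : (0:R) <= k%:R by [].
have -> : (2 * k.+2 - 3 = (2*k).+1)%N by lia.
set D : R := ((2*k).+1)%:R.
have hD : 0 < D by rewrite ltr0Sn.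
have hD0 : D != 0 by rewrite gt_eqF.
set g : R := k.+2%:R / D.
have hg0 : 0 <= g by rewrite divr_ge0 // ltW.
have hg2 : g <= 2 by rewrite /g ler_pdivrMr // /D; lra.
split.
- pose d (v : 'I_k.+2) : R := if val v == 0%N then 1 else if val v == 1%N then 0 else 2.
  pose x v := 1 - g * d v.
  pose w : 'I_k.+2 := Ordinal (isT : (1 < k.+2)%N).
  exists x; apply: (@attain R _ _ x w) => //.
  + move=> v; rewrite /x /d; case: ifP => h0; first by rewrite ler_norml; lra.
    case: ifP => h1; first by rewrite ler_norml; lra.
    have hk1 : (1 <= k)%N.
      have hv : (val v < k.+2)%N by exact: ltn_ord v.
      move: (val v) h0 h1 hv => m /negbT/eqP h0 /negbT/eqP h1 hv; lia.
    have hg1 : g <= 1.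
      rewrite /g ler_pdivrMr // /D; have : (1:R) <= k%:R by rewrite ler1n.
      lra.
    rewrite ler_norml; lra.
  + by rewrite /x /d /= mulr0 subr0 normr1.
  + rewrite sumrB sumr_const card_ord -mulr_sumr.
    have -> : \sum_(i < k.+2) d i = D.
      rewrite !big_ord_recl /d /=.
      rewrite sumr_const card_ord /D -mulr_natr; lra.
    by rewrite /g divfK // subrr.
  + by exists ord0, w.
  + move=> u v huv; rewrite /x; apply: dist_key => //.
    move: huv; rewrite /star /d; case: (val u == 0%N); case: (val v == 0%N) => //= _;
      [case: (val v == 1%N)|case: (val u == 1%N)]; lra.
- move=> x hx; have [w hw] := @inF_attain R _ x hx.
  set G := gamma_x (star k.+2) x.
    have hG : 0 <= G by apply: gamma_ge0.
  rewrite /g -{1}(card_ord k.+2).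
  have hst : forall u v : 'I_k.+2, (val u == 0%N) -> (val v != 0%N) -> `|x u - x v| <= G.
    by move=> u v hu hv; apply: edge_le; rewrite /star hu eq_sym (negbTE hv).
  have hst' : forall u v : 'I_k.+2, (val u != 0%N) -> (val v == 0%N) -> `|x u - x v| <= G.
    by move=> u v hu hv; apply: edge_le; rewrite /star hv (negbTE hu).
  have [hw0|hw0] := eqVneq (val w) 0%N.
  + apply: (@lower R _ _ x w (fun v => G - (v == w)%:R * G)) => //.
      move=> v; case: (eqVneq v w) => [->|hv]; first by rewrite subrr normr0 mul1r subrr.
      rewrite mul0r subr0; apply: hst; first by rewrite hw0. apply: contra hv => /eqP hv0.
      by apply/eqP/val_inj; rewrite /= hv0 hw0.
    rewrite sumrB sumr_const card_ord sum_ind -mulr_natr /D -/G; nra.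
  + pose c : 'I_k.+2 := ord0.
    apply: (@lower R _ _ x w (fun v => 2 * G - (v == w)%:R * (2 * G) - (v == c)%:R * G)) => //.
      move=> v; case: (eqVneq v w) => [->|hv].
        have -> : (w == c) = false by apply/negbTE; apply: contra hw0 => /eqP ->.
        by rewrite subrr normr0 mul1r mul0r subrr subr0.
      rewrite mul0r subr0; case: (eqVneq v c) => [->|hc].
        rewrite mul1r; have := hst' w c hw0 (eqxx _); lra.
      rewrite mul0r subr0; apply: le_trans (ler_distD (x c) _ _) _.
      have hv0 : val v != 0%N by apply: contra hc => /eqP hv0; apply/eqP/val_inj.
      have := hst' w c hw0 (eqxx _); have := hst c v (eqxx _) hv0; lra.
    rewrite !sumrB sumr_const card_ord !sum_ind -mulr_natr /D -/G; nra.
Qed.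

Lemma kbip_part (R : realType) (m n : nat) : (1 <= n)%N -> (n <= m)%N ->
  is_gamma (Kbip m n) (((m + n)%N%:R : R) / (2 * m + n - 2)%N%:R).
Proof.
case: m => [|a] hn; first by move=> h; move: (leq_trans hn h).
move=> hnm.
have ha : (0:R) <= a%:R by [].
have hnR : (1:R) <= n%:R by rewrite ler1n.
have hnmR : (n%:R : R) <= a.+1%:R by rewrite ler_nat.
have -> : (2 * a.+1 + n - 2 = 2 * a + n)%N by lia.
set D : R := (2 * a + n)%:R.
have hD : 0 < D by rewrite ltr0n; lia.
have hD0 : D != 0 by rewrite gt_eqF.
have hDe : D = 2 * a%:R + n%:R by rewrite /D natrD natrM.
set g : R := (a.+1 + n)%:R / D.
have hg0 : 0 <= g by rewrite divr_ge0 // ltW.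
have hg2 : g <= 2 by rewrite /g ler_pdivrMr // hDe natrD; lra.
pose j0 : 'I_n := Ordinal hn.
have sS : forall (F : ('I_a.+1 + 'I_n)%type -> R), \sum_v F v = \sum_i F (inl i) + \sum_j F (inr j).
  by move=> F; rewrite big_sumType.
have cS : #|{: ('I_a.+1 + 'I_n)%type}| = (a.+1 + n)%N by rewrite card_sum !card_ord.
split.
- pose d (v : ('I_a.+1 + 'I_n)%type) : R :=
    match v with inl i => if val i == 0%N then 0 else 2 | inr _ => 1 end.
  pose x v := 1 - g * d v.
  pose w : ('I_a.+1 + 'I_n)%type := inl ord0.
  exists x; apply: (@attain R _ _ x w) => //.
  + case=> [i|j]; rewrite /x /d; last by rewrite ler_norml; lra.
    case: ifP => h0; first by rewrite ler_norml; lra.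
    have ha1 : (1 <= a)%N.
      have hv : (val i < a.+1)%N by exact: ltn_ord i.
      move: (val i) h0 hv => m /negbT/eqP h0 hv; lia.
    have hg1 : g <= 1.
      rewrite /g ler_pdivrMr // hDe natrD; have : (1:R) <= a%:R by rewrite ler1n.
      lra.
    rewrite ler_norml; lra.
  + by rewrite /x /d /= mulr0 subr0 normr1.
  + rewrite sumrB sumr_const -mulr_sumr.
    have -> : \sum_(v : ('I_a.+1 + 'I_n)%type) d v = D.
      rewrite sS big_ord_recl /d /= !sumr_const !card_ord hDe -[2 *+ a]mulr_natr; lra.
    rewrite cS /g divfK // subrr //.
  + by exists (inl ord0), (inr j0).
  + move=> u v huv; rewrite /x; apply: dist_key => //.
    move: huv; rewrite /d; case: u => [i|j]; case: v => [i'|j'] //= _;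
      [case: (val i == 0%N)|case: (val i' == 0%N)]; lra.
- move=> x hx; have [w hw] := @inF_attain R _ x hx.
  set G := gamma_x (Kbip a.+1 n) x.
  have hG : 0 <= G by apply: gamma_ge0.
  rewrite /g -cS.
  have hlr : forall i j, `|x (inl i) - x (inr j)| <= G by move=> i j; apply: edge_le.
  have hrl : forall i j, `|x (inr j) - x (inl i)| <= G by move=> i j; apply: edge_le.
  case: w hw => [i|j] hw.
  + apply: (@lower R _ _ x (inl i) (fun v => match v with
        inl i' => 2 * G - (i' == i)%:R * (2 * G) | inr _ => G end)) => //.
      case=> [i'|j]; last exact: hlr.
      case: (eqVneq i' i) => [->|hi]; first by rewrite subrr normr0 mul1r subrr.
      rewrite mul0r subr0; apply: le_trans (ler_distD (x (inr j0)) _ _) _.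
      have := hlr i j0; have := hrl i' j0; lra.
    rewrite sS /= sumrB !sumr_const sum_ind !card_ord -[(2 * G) *+ _]mulr_natr -[G *+ n]mulr_natr hDe -/G; nra.
  + apply: (@lower R _ _ x (inr j) (fun v => match v with
        inr j' => 2 * G - (j' == j)%:R * (2 * G) | inl _ => G end)) => //.
      case=> [i|j']; first exact: hrl.
      case: (eqVneq j' j) => [->|hj]; first by rewrite subrr normr0 mul1r subrr.
      rewrite mul0r subr0; apply: le_trans (ler_distD (x (inl ord0)) _ _) _.
      have := hrl ord0 j; have := hlr ord0 j'; lra.
    rewrite sS /= sumrB !sumr_const sum_ind !card_ord -[(2 * G) *+ _]mulr_natr -[G *+ a.+1]mulr_natr hDe -/G; nra.
Qed.

Theorem corollary3p5 (R : realType) :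
  (forall n : nat, (2 <= n)%N ->
     is_gamma (star n) ((n%:R : R) / (2 * n - 3)%N%:R)) /\
  (forall m n : nat, (1 <= n)%N -> (n <= m)%N ->
     is_gamma (Kbip m n) (((m + n)%N%:R : R) / (2 * m + n - 2)%N%:R)).
Proof.
split; [exact: star_part | exact: kbip_part].
Qed.
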